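(* Let $U$ be a representation of $\tilde W$ on which $z=-1$ acts by $-\mathrm{id}$, and let $\mathfrak u\in U$ satisfy $\tilde r_1\mathfrak u=\zeta_1^{\ell_1}\mathfrak u$ and $\tilde r_2\mathfrak u=\zeta_2^{\ell_2}\mathfrak u$, where $\ell_a\in\{1,\dots,2m_a-1\}$ are odd integers. Then for $a\in\{1,2\}$, \[ O_a^\pm\,\mathfrak u=\pm i\,Q_a(\ell_a\pm1)\,\tilde f_a\mathfrak u,\qquad O_a^\pm O_a^\mp\,\mathfrak u=Q_a(\ell_a\mp1)^2\,\mathfrak u. \]
   Context: Let $x_1,\dots,x_4$ be the standard orthonormal basis of $\mathbb R^4$, with complexification $V=\mathbb C^4$ and the bilinear extension $(\cdot,\cdot)$ of the standard inner product. Fix positive integers $m_1,m_2$ and $\zeta_a=e^{i\pi/m_a}$. Let $\alpha_p=(\sin(p\pi/m_1),-\cos(p\pi/m_1),0,0)$ ($p=1,\dots,2m_1$), $\beta_q=(0,0,\sin(q\pi/m_2),-\cos(q\pi/m_2))$ ($q=1,\dots,2m_2$), $R$ the set of these vectors, $R_+=\{\alpha_1,\dots,\alpha_{m_1},\beta_1,\dots,\beta_{m_2}\}$, and $W\cong D_{2m_1}\times D_{2m_2}$ the group generated by the reflections $s_\alpha$, $\alpha\in R$. Let $\kappa:R\to\mathbb R$ be $W$-invariant (real-valued, standing assumption). If $m_1$ is odd, $\kappa_1$ denotes the common value on all $\alpha_p$; if $m_1$ is even, $\kappa_1=\kappa_{\alpha_p}$ ($p$ odd), $\kappa_2=\kappa_{\alpha_p}$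 ($p$ even); similarly $\kappa_3$ (and $\kappa_4$ when $m_2$ is even) for the $\beta_q$. $Q_a(j)$ ($a\in\{1,2\}$, $j\in\mathbb Z$) equals $m_a\kappa_{2a-1}$ if $m_a$ odd and $j\equiv0\pmod{2m_a}$; $\frac{m_a}{2}(\kappa_{2a}+\kappa_{2a-1})$ if $m_a$ even and $j\equiv0\pmod{2m_a}$; $\frac{m_a}2(\kappa_{2a}-\kappa_{2a-1})$ if $m_a$ even and $j\equiv m_a\pmod{2m_a}$; $0$ otherwise. Let $\mathcal C$ be the complex Clifford algebra generated by $e_1,\dots,e_4$ with $e_je_k+e_ke_j=2\delta_{jk}$, $\gamma:V\to\mathcal C$ linear with $\gamma(x_j)=e_j$, and $\tilde W\subset\mathcal C^\times$ the group generated by all $\gamma(\alpha)$, $\alpha\in R$; $z=-1\in\tilde W$. Put $\tilde s_p=\gamma(\alpha_p)$, $\tilde t_q=\gamma(\beta_q)$, $\tilde f_1=\tilde s_{m_1}$, $\tilde f_2=\tilde t_{m_2}$, $\tilde r_1=z\tilde s_{m_1}\tilde s_1$, $\tilde r_2=z\tilde t_{m_2}\tilde t_1$. Let $z_a^\pm=x_{2a-1}\pm ix_{2a}$, and for $x\in V$ let $O(x)=\sum_{\alpha\in R_+}\kappa_\alpha(x,\alpha)\gamma(\alpha)\in\mathbb C\tilde W$ (this is the image of the one-index symmetry of the Dunkl total angular momentum algebra), acting on $U$; write $O_a^\pm=O(z_a^\pm)$. *)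

(* Defs.v *)
From HB Require Import structures.
From mathcomp Require Import all_boot all_order all_algebra.
From mathcomp Require Import complex.
From mathcomp Require Import reals trigo.
Set Implicit Arguments. Unset Strict Implicit. Unset Printing Implicit Defensive.
Import Order.TTheory GRing.Theory Num.Theory.
Local Open Scope ring_scope.

Section Defs.
Context {R : realType}.
Local Notation C := (complex R).
Local Notation Cr x := (Complex x 0).
Local Notation Ci := (Complex 0 1).

Definition vec4 (a b c d : C) : 'rV[C]_4 := \row_(j < 4) nth 0 [:: a; b; c; d] j.
Definition bil (x y : 'rV[C]_4) : C := \sum_(j < 4) x 0 j * y 0 j.

Definition alpha (m p : nat) : 'rV[C]_4 :=
  vec4 (Cr (sin (p%:R * pi / m%:R))) (Cr (- cos (p%:R * pi / m%:R))) 0 0.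
Definition beta (m q : nat) : 'rV[C]_4 :=
  vec4 0 0 (Cr (sin (q%:R * pi / m%:R))) (Cr (- cos (q%:R * pi / m%:R))).
Definition rootv (a : 'I_2) (m p : nat) : 'rV[C]_4 :=
  if val a == 0%N then alpha m p else beta m p.

Definition inR (m1 m2 : nat) (v : 'rV[C]_4) : Prop :=
  (exists2 p, (1 <= p <= 2 * m1)%N & v = alpha m1 p) \/
  (exists2 q, (1 <= q <= 2 * m2)%N & v = beta m2 q).

Definition refl (b v : 'rV[C]_4) : 'rV[C]_4 := v - (2 * bil v b / bil b b) *: b.

(* kappa : R -> real, W-invariant (W generated by the reflections s_b, b in R) *)
Definition W_invariant (m1 m2 : nat) (kappa : 'rV[C]_4 -> R) : Prop :=
  forall a b, inR m1 m2 a -> inR m1 m2 b -> kappa (refl b a) = kappa a.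

Definition mm (m1 m2 : nat) (a : 'I_2) : nat := if val a == 0%N then m1 else m2.

(* kappa_{2a-1} = value on roots with odd index, kappa_{2a} = value on roots with even index *)
Definition kodd (m1 m2 : nat) (kappa : 'rV[C]_4 -> R) (a : 'I_2) : R :=
  kappa (rootv a (mm m1 m2 a) 1).
Definition keven (m1 m2 : nat) (kappa : 'rV[C]_4 -> R) (a : 'I_2) : R :=
  kappa (rootv a (mm m1 m2 a) 2).

Definition Qa (m1 m2 : nat) (kappa : 'rV[C]_4 -> R) (a : 'I_2) (j : int) : R :=
  let m := mm m1 m2 a in
  let k1 := kodd m1 m2 kappa a in
  let k2 := keven m1 m2 kappa a in
  if odd m then
    (if (j %% (2 * m)%:Z)%Z == 0 then m%:R * k1 else 0)
  else if (j %% (2 * m)%:Z)%Z == 0 then (m%:R / 2) * (k2 + k1)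
  else if (j %% (2 * m)%:Z)%Z == m%:Z then (m%:R / 2) * (k2 - k1)
  else 0.

(* The complex Clifford algebra of C^4: basis e_A, A a subset of {1..4}
   (e_A = e_{a1}...e_{ak}, a1 < ... < ak), e_A e_B = sgn(A,B) e_{A symdiff B}. *)
Definition clif := {ffun {set 'I_4} -> C}.
Definition clsgn (A B : {set 'I_4}) : C :=
  (-1) ^+ #|[set p : 'I_4 * 'I_4 | [&& p.1 \in A, p.2 \in B & (p.2 < p.1)%N]]|.
Definition symd (A B : {set 'I_4}) : {set 'I_4} := (A :\: B) :|: (B :\: A).
Definition clmul (x y : clif) : clif :=
  [ffun D => \sum_(A : {set 'I_4}) \sum_(B : {set 'I_4})
               (if symd A B == D then clsgn A B * x A * y B else 0)].
Definition clscal (c : C) : clif := [ffun A => if A == set0 then c else 0].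
Definition cl1 : clif := clscal 1.
Definition clz : clif := clscal (-1).
Definition gamma (v : 'rV[C]_4) : clif :=
  [ffun A => \sum_(j < 4) (if A == [set j] then v 0 j else 0)].

(* the group W~ generated by gamma(alpha), alpha in R
   (each generator is its own inverse, so the generated monoid is the group) *)
Inductive Wt (m1 m2 : nat) : clif -> Prop :=
| Wt_one : Wt m1 m2 cl1
| Wt_gen v g : inR m1 m2 v -> Wt m1 m2 g -> Wt m1 m2 (clmul (gamma v) g).

Definition ft (m1 m2 : nat) (a : 'I_2) : clif :=
  gamma (rootv a (mm m1 m2 a) (mm m1 m2 a)).
Definition rt (m1 m2 : nat) (a : 'I_2) : clif :=
  clmul clz (clmul (gamma (rootv a (mm m1 m2 a) (mm m1 m2 a)))
                   (gamma (rootv a (mm m1 m2 a) 1))).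

Definition zeta (m : nat) : C := Complex (cos (pi / m%:R)) (sin (pi / m%:R)).

Definition zvec (a : 'I_2) (s : bool) : 'rV[C]_4 :=
  let y := if s then Ci else - Ci in
  if val a == 0%N then vec4 1 y 0 0 else vec4 0 0 1 y.

(* action of O(x) = sum_{alpha in R_+} kappa_alpha (x, alpha) gamma(alpha) on U *)
Definition Oact (m1 m2 : nat) (kappa : 'rV[C]_4 -> R) (U : lmodType C)
    (rho : clif -> {linear U -> U}) (x : 'rV[C]_4) (u : U) : U :=
  \sum_(p < m1) (Cr (kappa (alpha m1 p.+1)) * bil x (alpha m1 p.+1))
                   *: rho (gamma (alpha m1 p.+1)) u
  + \sum_(q < m2) (Cr (kappa (beta m2 q.+1)) * bil x (beta m2 q.+1))
                   *: rho (gamma (beta m2 q.+1)) u.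

Definition sgnC (s : bool) : C := if s then 1 else -1.
Definition sgnZ (s : bool) : int := if s then 1 else -1.

End Defs.

(* Main.v *)
Require Import Defs.
From HB Require Import structures.
From mathcomp Require Import all_boot all_order all_algebra.
From mathcomp Require Import complex.
From mathcomp Require Import reals trigo.
From mathcomp Require Import ring lra zify.
Import Order.TTheory GRing.Theory Num.Theory.
Local Open Scope ring_scope.

Local Notation Cr x := (Complex x 0).


Lemma scC {R : realType} (c y : complex R) : c *: y = c * y. Proof. by []. Qed.

Definition delta {R : realType} (A : {set 'I_4}) : @clif R := locked [ffun B => (B == A)%:R].
Lemma deltaE {R : realType} A D : (delta A : @clif R) D = (D == A)%:R.
Proof. by rewrite /delta -lock ffunE. Qed.

Lemma clD {R : realType} (f g : @clif R) D : (f + g) D = f D + g D.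
Proof. by rewrite ffunE. Qed.
Lemma clZ {R : realType} c (f : @clif R) D : (c *: f) D = c * f D.
Proof. by rewrite ffunE. Qed.


Lemma clmulDl {R : realType} (x y w : @clif R) : clmul (x + y) w = clmul x w + clmul y w.
Proof.
apply/ffunP => D; rewrite !ffunE -big_split; apply: eq_bigr => A _.
rewrite -big_split; apply: eq_bigr => B _; case: ifP => _ /=; rewrite ?addr0 // ffunE; ring.
Qed.
Lemma clmulDr {R : realType} (x y w : @clif R) : clmul w (x + y) = clmul w x + clmul w y.
Proof.
apply/ffunP => D; rewrite !ffunE -big_split; apply: eq_bigr => A _.
rewrite -big_split; apply: eq_bigr => B _; case: ifP => _ /=; rewrite ?addr0 // ffunE; ring.
Qed.
Lemma clmulZl {R : realType} c (x w : @clif R) : clmul (c *: x) w = c *: clmul x w.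
Proof.
apply/ffunP => D; rewrite !ffunE scC mulr_sumr; apply: eq_bigr => A _.
rewrite mulr_sumr; apply: eq_bigr => B _; case: ifP => _; rewrite ?mulr0 //.
by rewrite ffunE scC; ring.
Qed.
Lemma clmulZr {R : realType} c (x w : @clif R) : clmul w (c *: x) = c *: clmul w x.
Proof.
apply/ffunP => D; rewrite !ffunE scC mulr_sumr; apply: eq_bigr => A _.
rewrite mulr_sumr; apply: eq_bigr => B _; case: ifP => _; rewrite ?mulr0 //.
by rewrite ffunE scC; ring.
Qed.
Lemma clmul_delta {R : realType} (A B : {set 'I_4}) :
  clmul (delta A) (delta B) = clsgn A B *: (delta (symd A B) : @clif R).
Proof.
apply/ffunP => D; rewrite ffunE clZ deltaE (bigD1 A) //=.
rewrite [X in _ + X]big1 => [|A' hA']; last first.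
  by apply: big1 => B' _; rewrite deltaE (negbTE hA') mulr0 mul0r; case: ifP.
rewrite addr0 (bigD1 B) //=.
rewrite [X in _ + X]big1 => [|B' hB']; last first.
  by rewrite !deltaE (negbTE hB') mulr0; case: ifP.
rewrite addr0 !deltaE !eqxx !mulr1 eq_sym.
by case: ifP => _; rewrite ?mulr1 ?mulr0.
Qed.


HB.lock Definition Qc {R : realType} (i j : 'I_4) (a b c d : complex R) : @clif R :=
  a *: delta set0 + b *: delta [set i] + c *: delta [set j] + d *: delta [set i; j].

Lemma clsgn_ij {R : realType} (i j : 'I_4) (A B : {set 'I_4}) : (i < j)%N ->
  A \subset [set i; j] -> B \subset [set i; j] ->
  clsgn A B = (if (j \in A) && (i \in B) then -1 else 1 : complex R).
Proof.
move=> hij /subsetP sA /subsetP sB; rewrite /clsgn.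
case: ifP => h.
  move/andP: h => [jA iB].
  have -> : [set p : 'I_4 * 'I_4 | [&& p.1 \in A, p.2 \in B & (p.2 < p.1)%N]] = [set (j, i)].
    apply/setP => [[x y]]; rewrite !inE /= xpair_eqE; apply/idP/idP.
      case/and3P => xA yB yx.
      move: (sA x xA) (sB y yB); rewrite !inE => /orP[]/eqP ex /orP[]/eqP ey; subst x y => //;
        rewrite ?eqxx //; lia.
    by case/andP => /eqP -> /eqP ->; rewrite jA iB hij.
  by rewrite cards1 expr1.
have -> : [set p : 'I_4 * 'I_4 | [&& p.1 \in A, p.2 \in B & (p.2 < p.1)%N]] = set0.
  apply/setP => [[x y]]; rewrite !inE /=; apply/negP.
  case/and3P => xA yB yx.
  move: (sA x xA) (sB y yB); rewrite !inE => /orP[]/eqP ex /orP[]/eqP ey; subst x y => //;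
    try lia.
by rewrite cards0 expr0.
Qed.

Ltac symd_tac hij :=
  let k := fresh "k" in let Hi := fresh "Hi" in let Hj := fresh "Hj" in
  let hji := fresh "hji" in
  apply/setP; intro k; rewrite /symd !inE;
  have hji := ltn_eqF hij;
  case Hi: (k == _); case Hj: (k == _) => //=;
  try (move/eqP: Hi => Hi; move/eqP: Hj => Hj; subst; by rewrite ltnn in hij).

Lemma test {R : realType} (i j : 'I_4) : (i < j)%N -> symd [set i] [set i; j] = [set j].
Proof. move=> hij. symd_tac hij. Qed.

Lemma symd0A (A : {set 'I_4}) : symd set0 A = A.
Proof. by apply/setP => k; rewrite /symd !inE /= ?orbF ?andbT ?andbF ?orbF. Qed.
Lemma symdA0 (A : {set 'I_4}) : symd A set0 = A.
Proof. by apply/setP => k; rewrite /symd !inE /= ?orbF ?andbT ?andbF ?orbF. Qed.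
Lemma symdAA (A : {set 'I_4}) : symd A A = set0.
Proof. by apply/setP => k; rewrite /symd !inE /= ?andNb ?andbN. Qed.



Lemma QcE {R : realType} (i j : 'I_4) a b c d D : (Qc i j a b c d : @clif R) D =
  a * (D == set0)%:R + b * (D == [set i])%:R + c * (D == [set j])%:R + d * (D == [set i; j])%:R.
Proof. by rewrite Qc.unlock 3!clD 4!clZ 4!deltaE. Qed.
Lemma Qc_add {R : realType} (i j : 'I_4) (a b c d a' b' c' d' : complex R) :
  Qc i j a b c d + Qc i j a' b' c' d' = Qc i j (a + a') (b + b') (c + c') (d + d').
Proof. apply/ffunP => D; rewrite clD !QcE; ring. Qed.
Lemma Qc_scale {R : realType} (i j : 'I_4) k (a b c d : complex R) :
  k *: Qc i j a b c d = Qc i j (k * a) (k * b) (k * c) (k * d).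
Proof. apply/ffunP => D. rewrite clZ !QcE. ring. Qed.

Lemma deltaQ {R : realType} (i j : 'I_4) : (i < j)%N ->
  [/\ (delta set0 : @clif R) = Qc i j 1 0 0 0, (delta [set i] : @clif R) = Qc i j 0 1 0 0,
      (delta [set j] : @clif R) = Qc i j 0 0 1 0 & (delta [set i; j] : @clif R) = Qc i j 0 0 0 1].
Proof.
move=> hij; have hji : (i == j) = false by apply/eqP => e; rewrite e ltnn in hij.
split.
(apply/ffunP => D; rewrite deltaE QcE).
ring.
all: (apply/ffunP => D; rewrite deltaE QcE; ring).
Qed.

Lemma QcD {R : realType} (i j : 'I_4) (a b c d : complex R) :
  Qc i j a b c d = a *: delta set0 + b *: delta [set i] + c *: delta [set j] + d *: delta [set i; j].
Proof. by rewrite Qc.unlock. Qed.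


Lemma clmul_Qc {R : realType} (i j : 'I_4) (a b c d a' b' c' d' : complex R) : (i < j)%N ->
  clmul (Qc i j a b c d) (Qc i j a' b' c' d') =
  Qc i j (a*a' + b*b' + c*c' - d*d') (a*b' + b*a' - c*d' + d*c')
         (a*c' + c*a' + b*d' - d*b') (a*d' + d*a' + b*c' - c*b').
Proof.
move=> hij.
have e1 : symd [set i] [set j] = [set i; j] by symd_tac hij.
have e2 : symd [set j] [set i] = [set i; j] by symd_tac hij.
have e3 : symd [set i] [set i; j] = [set j] by symd_tac hij.
have e4 : symd [set j] [set i; j] = [set i] by symd_tac hij.
have e5 : symd [set i; j] [set i] = [set j] by symd_tac hij.
have e6 : symd [set i; j] [set j] = [set i] by symd_tac hij.
have hji : (i == j) = false by apply/eqP => e; rewrite e ltnn in hij.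
rewrite (QcD i j a b c d) (QcD i j a' b' c' d'). rewrite 3!clmulDl 12!clmulDr 16!clmulZl 16!clmulZr 16!clmul_delta.
rewrite !symd0A !symdA0 !symdAA e1 e2 e3 e4 e5 e6.
rewrite !(@clsgn_ij R i j) // ?sub0set ?sub1set ?subxx ?inE ?eqxx ?orbT ?hji ?(eq_sym j i) ?hji //=.
have [q0 q1 q2 q3] := @deltaQ R i j hij.
rewrite q0 q1 q2 q3 !Qc_scale !Qc_add; congr Qc; ring.
Qed.


Definition i0 : 'I_4 := @Ordinal 4 0 isT.
Definition i1 : 'I_4 := @Ordinal 4 1 isT.
Definition i2 : 'I_4 := @Ordinal 4 2 isT.
Definition i3 : 'I_4 := @Ordinal 4 3 isT.

Lemma ifR {R : realType} (b : bool) (x : complex R) : (if b then x else 0) = x * b%:R.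
Proof. by case: b; rewrite ?mulr1 ?mulr0. Qed.

Lemma gamma_vec4 {R : realType} (x y z w : complex R) :
  gamma (vec4 x y z w) = [ffun D => x * (D == [set i0])%:R + y * (D == [set i1])%:R
     + z * (D == [set i2])%:R + w * (D == [set i3])%:R].
Proof.
apply/ffunP => D; rewrite !ffunE !big_ord_recr big_ord0 /= /vec4 !mxE /=.
have -> : widen_ord (leqnSn 3) (widen_ord (leqnSn 2) (widen_ord (leqnSn 1) ord_max)) = i0
  by apply/val_inj.
have -> : widen_ord (leqnSn 3) (widen_ord (leqnSn 2) ord_max) = i1 by apply/val_inj.
have -> : widen_ord (leqnSn 3) ord_max = i2 by apply/val_inj.
have -> : ord_max = i3 by apply/val_inj.
rewrite !ifR; ring.
Qed.


Definition ia (a : 'I_2) : 'I_4 := if val a == 0%N then i0 else i2.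
Definition ja (a : 'I_2) : 'I_4 := if val a == 0%N then i1 else i3.
Lemma ia_ja a : (ia a < ja a)%N.
Proof. by case: a => [[|[|]]]. Qed.

Definition Sq {R : realType} (i j : 'I_4) (x : R) : @clif R :=
  Qc i j 0 (Cr (sin x)) (Cr (- cos x)) 0.
Definition Eq {R : realType} (i j : 'I_4) (x : R) : @clif R :=
  Qc i j (Cr (cos x)) 0 0 (Cr (sin x)).

Lemma gamma_root {R : realType} (a : 'I_2) m p :
  gamma (rootv a m p) = Sq (ia a) (ja a) (p%:R * pi / m%:R :> R).
Proof.
case: a => [[|[|//]] ha]; rewrite /rootv /alpha /beta /= gamma_vec4 /Sq /ia /ja /=;
  apply/ffunP => D; rewrite ffunE QcE; ring.
Qed.

Ltac ceq := apply/eqP; rewrite eq_complex /=; apply/andP; split; apply/eqP.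
Lemma Cr0 {R : realType} : Cr 0 = 0 :> complex R. Proof. by []. Qed.
Lemma Cr1 {R : realType} : Cr 1 = 1 :> complex R. Proof. by []. Qed.
Lemma CrN1 {R : realType} : Cr (-1) = -1 :> complex R. Proof. ceq; ring. Qed.

Lemma cl1Q {R : realType} (i j : 'I_4) : (cl1 : @clif R) = Qc i j 1 0 0 0.
Proof.
apply/ffunP => D; rewrite QcE ffunE; case: (D == set0); rewrite /= ?mulr0 ?mulr1; ring.
Qed.
Lemma clzQ {R : realType} (i j : 'I_4) : (clz : @clif R) = Eq i j pi.
Proof.
rewrite /Eq cospi sinpi CrN1 Cr0.
apply/ffunP => D; rewrite QcE ffunE; case: (D == set0); rewrite /= ?mulr0 ?mulr1; ring.
Qed.

Lemma mulSS {R : realType} (i j : 'I_4) (x y : R) : (i < j)%N ->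
  clmul (Sq i j x) (Sq i j y) = Eq i j (y - x).
Proof.
move=> hij; rewrite /Sq /Eq clmul_Qc //; congr Qc; ceq;
  rewrite ?cosB ?sinB; ring.
Qed.
Lemma mulSE {R : realType} (i j : 'I_4) (x y : R) : (i < j)%N ->
  clmul (Sq i j x) (Eq i j y) = Sq i j (x + y).
Proof.
move=> hij; rewrite /Sq /Eq clmul_Qc //; congr Qc; ceq;
  rewrite ?cosD ?sinD; ring.
Qed.
Lemma mulES {R : realType} (i j : 'I_4) (x y : R) : (i < j)%N ->
  clmul (Eq i j y) (Sq i j x) = Sq i j (x - y).
Proof.
move=> hij; rewrite /Sq /Eq clmul_Qc //; congr Qc; ceq;
  rewrite ?cosB ?sinB; ring.
Qed.
Lemma mulEE {R : realType} (i j : 'I_4) (x y : R) : (i < j)%N ->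
  clmul (Eq i j x) (Eq i j y) = Eq i j (x + y).
Proof.
move=> hij; rewrite /Sq /Eq clmul_Qc //; congr Qc; ceq;
  rewrite ?cosD ?sinD; ring.
Qed.
Lemma mulS1 {R : realType} (i j : 'I_4) (x : R) : (i < j)%N ->
  clmul (Sq i j x) cl1 = Sq i j x.
Proof.
move=> hij; rewrite (cl1Q i j) /Sq clmul_Qc //; congr Qc; ceq; ring.
Qed.
Lemma E0 {R : realType} (i j : 'I_4) : (Eq i j 0 : @clif R) = cl1.
Proof. by rewrite (cl1Q i j) /Eq cos0 sin0. Qed.


Lemma thm {R : realType} (m : nat) : (0 < m)%N -> m%:R * pi / m%:R = pi :> R.
Proof. by move=> hm; rewrite mulrAC divff ?mul1r // pnatr_eq0 -lt0n. Qed.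
Lemma thS {R : realType} (m p : nat) :
  p.+1%:R * pi / m%:R = p%:R * pi / m%:R + pi / m%:R :> R.
Proof. by rewrite -[p.+1]addn1 natrD [(_ + 1) * _]mulrDl mul1r mulrDl. Qed.
Lemma th1 {R : realType} (m : nat) : 1%:R * pi / m%:R = pi / m%:R :> R.
Proof. by rewrite mul1r. Qed.

Lemma inR_root {R : realType} (m1 m2 : nat) (a : 'I_2) (p : nat) :
  (1 <= p <= 2 * mm m1 m2 a)%N -> @inR R m1 m2 (rootv a (mm m1 m2 a) p).
Proof.
case: a => [[|[|//]] ha] hp; rewrite /rootv /mm /=; [left | right]; by exists p.
Qed.

Lemma gam1 {R : realType} (a : 'I_2) m p :
  clmul (gamma (rootv a m p)) cl1 = gamma (rootv a m p) :> @clif R.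
Proof. by rewrite gamma_root mulS1 // ia_ja. Qed.

Lemma WtG {R : realType} (m1 m2 : nat) (a : 'I_2) (p : nat) :
  (1 <= p <= 2 * mm m1 m2 a)%N -> Wt m1 m2 (gamma (rootv a (mm m1 m2 a) p) : @clif R).
Proof.
move=> hp; rewrite -gam1; apply: Wt_gen; [exact: inR_root | exact: Wt_one].
Qed.

Lemma rtE {R : realType} (m1 m2 : nat) (a : 'I_2) : (0 < mm m1 m2 a)%N ->
  (rt m1 m2 a : @clif R) = Eq (ia a) (ja a) (pi / (mm m1 m2 a)%:R).
Proof.
move=> hm; rewrite /rt !gamma_root thm // th1 (clzQ (ia a) (ja a)) mulSS ?ia_ja //.
rewrite mulEE ?ia_ja //; congr Eq; ring.
Qed.

Lemma rtC {R : realType} (m1 m2 : nat) (a : 'I_2) : (0 < mm m1 m2 a)%N ->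
  (rt m1 m2 a : @clif R) = clmul (gamma (rootv a (mm m1 m2 a) (mm m1 m2 a)))
     (clmul (gamma (rootv a (mm m1 m2 a) (mm m1 m2 a).+1)) cl1).
Proof.
move=> hm; rewrite rtE // !gamma_root mulS1 ?ia_ja // thS thm // mulSS ?ia_ja //.
congr Eq; ring.
Qed.

Lemma ftE {R : realType} (m1 m2 : nat) (a : 'I_2) : (0 < mm m1 m2 a)%N ->
  (ft m1 m2 a : @clif R) = Sq (ia a) (ja a) pi.
Proof. by move=> hm; rewrite /ft gamma_root thm. Qed.

Lemma stepC {R : realType} (m1 m2 : nat) (a : 'I_2) (p : nat) : (0 < mm m1 m2 a)%N ->
  (gamma (rootv a (mm m1 m2 a) p.+1) : @clif R) =
  clmul (gamma (rootv a (mm m1 m2 a) p)) (rt m1 m2 a).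
Proof.
move=> hm; rewrite rtE // !gamma_root mulSE ?ia_ja // thS //.
Qed.


Lemma zeta_pow {R : realType} (m p : nat) :
  zeta m ^+ p = Complex (cos (p%:R * pi / m%:R)) (sin (p%:R * pi / m%:R)) :> complex R.
Proof.
elim: p => [|p IH].
  by rewrite expr0 !mul0r cos0 sin0.
rewrite exprSr IH thS cosD sinD /zeta; ceq; ring.
Qed.

Lemma zeta_m {R : realType} (m : nat) : (0 < m)%N -> zeta m ^+ m = -1 :> complex R.
Proof. by move=> hm; rewrite zeta_pow thm // cospi sinpi; ceq; ring. Qed.

Lemma zeta_lm {R : realType} (m l : nat) : (0 < m)%N -> odd l -> zeta m ^+ (l * m) = -1 :> complex R.
Proof.
move=> hm hl; rewrite mulnC exprM zeta_m //.
by rewrite -signr_odd hl expr1.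
Qed.


Lemma rho2 {R : realType} (m1 m2 : nat) (U : lmodType (complex R))
  (rho : @clif R -> {linear U -> U})
  (rho1 : forall v, rho cl1 v = v)
  (rhoM : forall g h, Wt m1 m2 g -> Wt m1 m2 h ->
            forall v, rho (clmul g h) v = rho g (rho h v))
  (a : 'I_2) (p q : nat) (w : U) :
  (1 <= p <= 2 * mm m1 m2 a)%N -> (1 <= q <= 2 * mm m1 m2 a)%N ->
  rho (clmul (gamma (rootv a (mm m1 m2 a) p)) (clmul (gamma (rootv a (mm m1 m2 a) q)) cl1)) w
  = rho (gamma (rootv a (mm m1 m2 a) p)) (rho (gamma (rootv a (mm m1 m2 a) q)) w).
Proof.
move=> hp hq.
rewrite rhoM; first last.
- by apply: Wt_gen; [exact: inR_root | exact: Wt_one].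
- exact: WtG.
by rewrite rhoM ?rho1 //; [exact: WtG | exact: Wt_one].
Qed.

Lemma Wt_rt {R : realType} (m1 m2 : nat) (a : 'I_2) : (0 < mm m1 m2 a)%N ->
  Wt m1 m2 (rt m1 m2 a : @clif R).
Proof.
move=> hm; rewrite rtC //; apply: Wt_gen; first by apply: inR_root; lia.
by apply: Wt_gen; [apply: inR_root; lia | exact: Wt_one].
Qed.

Lemma stepA {R : realType} (m1 m2 : nat) (U : lmodType (complex R))
  (rho : @clif R -> {linear U -> U})
  (rhoM : forall g h, Wt m1 m2 g -> Wt m1 m2 h ->
            forall v, rho (clmul g h) v = rho g (rho h v))
  (a : 'I_2) (p : nat) (w : U) : (0 < mm m1 m2 a)%N ->
  (1 <= p <= 2 * mm m1 m2 a)%N ->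
  rho (gamma (rootv a (mm m1 m2 a) p.+1)) w
  = rho (gamma (rootv a (mm m1 m2 a) p)) (rho (rt m1 m2 a) w).
Proof.
move=> hm hp; rewrite stepC // rhoM //; [exact: WtG | exact: Wt_rt].
Qed.

Lemma stepB {R : realType} (m1 m2 : nat) (U : lmodType (complex R))
  (rho : @clif R -> {linear U -> U})
  (rhoM : forall g h, Wt m1 m2 g -> Wt m1 m2 h ->
            forall v, rho (clmul g h) v = rho g (rho h v))
  (a : 'I_2) (l : nat) (w : U) : (0 < mm m1 m2 a)%N -> odd l ->
  rho (rt m1 m2 a) w = zeta (mm m1 m2 a) ^+ l *: w ->
  forall p, (1 <= p <= mm m1 m2 a)%N ->
  rho (gamma (rootv a (mm m1 m2 a) p)) w =
    - (zeta (mm m1 m2 a) ^+ (l * p)) *: rho (ft m1 m2 a) w.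
Proof.
move=> hm hl hw p hp.
set m := mm m1 m2 a.
have key : forall d q, (1 <= q)%N -> (d + q = m)%N ->
  rho (gamma (rootv a m m)) w = zeta m ^+ (l * d) *: rho (gamma (rootv a m q)) w.
  elim=> [|d IH] q hq hdq.
    by rewrite muln0 expr0 scale1r add0n in hdq *; rewrite hdq.
  rewrite (IH q.+1) //; last by lia.
  rewrite stepA //; last by rewrite /m in hdq *; lia.
  rewrite hw linearZ /= scalerA -exprD; congr (_ ^+ _ *: _); lia.
have := key (m - p)%N p; rewrite /ft -/m => ->; [|lia|lia].
rewrite scalerA mulNr -exprD.
have -> : (l * p + l * (m - p) = l * m)%N by rewrite -mulnDr; congr (_ * _)%N; lia.
by rewrite zeta_lm // opprK scale1r.
Qed.


Lemma bil_roots {R : realType} (a : 'I_2) (m p q : nat) :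
  bil (rootv a m p) (rootv a m q) =
  Cr (sin (p%:R * pi / m%:R) * sin (q%:R * pi / m%:R) + cos (p%:R * pi / m%:R) * cos (q%:R * pi / m%:R)) :> complex R.
Proof.
case: a => [[|[|//]] ha]; rewrite /bil !big_ord_recr big_ord0 /rootv /alpha /beta /vec4 /= !mxE /=;
  ceq; ring.
Qed.

Lemma bil_rr {R : realType} (a : 'I_2) (m p : nat) : bil (rootv a m p) (rootv a m p) = 1 :> complex R.
Proof.
rewrite bil_roots; ceq; last exact: erefl.
by rewrite -[RHS](cos2Dsin2 (p%:R * pi / m%:R)) addrC !expr2.
Qed.

Lemma refl_self {R : realType} (b : 'rV[complex R]_4) : bil b b = 1 -> refl b b = - b.
Proof. by move=> h; rewrite /refl h divr1 mulr1 scalerDl scale1r opprD addrA subrr add0r. Qed.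

Lemma root_addm {R : realType} (a : 'I_2) (m p : nat) : (0 < m)%N ->
  rootv a m (p + m) = - rootv a m p :> 'rV[complex R]_4.
Proof.
move=> hm.
have e : (p + m)%:R * pi / m%:R = p%:R * pi / m%:R + pi :> R.
  by rewrite natrD mulrDl mulrDl thm.
apply/rowP => k; rewrite !mxE /rootv /alpha /beta e sinDpi cosDpi.
case: a => [[|[|//]] ha]; rewrite /vec4 !mxE;
  case: k => [[|[|[|[|//]]]] hk] /=; ceq; ring.
Qed.

Lemma sc1 {R : realType} (x y : R) : y = y * (cos x ^+ 2 + sin x ^+ 2).
Proof. by rewrite cos2Dsin2 mulr1. Qed.

Lemma bil_next {R : realType} (a : 'I_2) (m p : nat) :
  bil (rootv a m p) (rootv a m p.+1) = Cr (cos (pi / m%:R)) :> complex R.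
Proof.
rewrite bil_roots thS cosD sinD; congr Complex.
rewrite [RHS](sc1 (p%:R * pi / m%:R)); ring.
Qed.

Lemma refl_next {R : realType} (a : 'I_2) (m p : nat) :
  refl (rootv a m p.+1) (rootv a m p) = - rootv a m p.+2 :> 'rV[complex R]_4.
Proof.
rewrite /refl bil_rr divr1 bil_next.
have e2 : p.+2%:R * pi / m%:R = p.+1%:R * pi / m%:R + pi / m%:R :> R by rewrite thS.
have e0 : p%:R * pi / m%:R = p.+1%:R * pi / m%:R - pi / m%:R :> R by rewrite thS addrK.
apply/rowP => k; rewrite !mxE /rootv /alpha /beta e2 e0.
case: a => [[|[|//]] ha]; rewrite /vec4 !mxE;
  case: k => [[|[|[|[|//]]]] hk] /=; ceq; rewrite ?sinD ?cosD ?sinN ?cosN; ring.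
Qed.


Lemma K_neg {R : realType} (m1 m2 : nat) (kappa : 'rV[complex R]_4 -> R)
  (hkappa : W_invariant m1 m2 kappa) (a : 'I_2) (p : nat) :
  (1 <= p <= 2 * mm m1 m2 a)%N ->
  kappa (- rootv a (mm m1 m2 a) p) = kappa (rootv a (mm m1 m2 a) p).
Proof.
move=> hp; rewrite -refl_self ?bil_rr //; apply: hkappa; exact: inR_root.
Qed.

Lemma K_step {R : realType} (m1 m2 : nat) (kappa : 'rV[complex R]_4 -> R)
  (hkappa : W_invariant m1 m2 kappa) (a : 'I_2) (p : nat) :
  (1 <= p)%N -> (p.+2 <= 2 * mm m1 m2 a)%N ->
  kappa (rootv a (mm m1 m2 a) p) = kappa (rootv a (mm m1 m2 a) p.+2).
Proof.
move=> h1 h2.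
rewrite -(hkappa _ (rootv a (mm m1 m2 a) p.+1)); try (apply: inR_root; lia).
by rewrite refl_next K_neg //; lia.
Qed.

Lemma K_par {R : realType} (m1 m2 : nat) (kappa : 'rV[complex R]_4 -> R)
  (hkappa : W_invariant m1 m2 kappa) (a : 'I_2) (p : nat) :
  (1 <= p <= 2 * mm m1 m2 a)%N ->
  kappa (rootv a (mm m1 m2 a) p) =
  if odd p then kappa (rootv a (mm m1 m2 a) 1) else kappa (rootv a (mm m1 m2 a) 2).
Proof.
elim: p {-2}p (leqnn p) => [|n IH] p hpn hp; first by lia.
case: p hpn hp => [|[|[|p]]] hpn hp //=.
rewrite -(@K_step _ _ _ _ hkappa a p.+1); last (by lia); last by lia.
rewrite IH /=; [by rewrite negbK | lia | lia].
Qed.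

Lemma K_oddm {R : realType} (m1 m2 : nat) (kappa : 'rV[complex R]_4 -> R)
  (hkappa : W_invariant m1 m2 kappa) (a : 'I_2) :
  (0 < mm m1 m2 a)%N -> odd (mm m1 m2 a) ->
  kappa (rootv a (mm m1 m2 a) 2) = kappa (rootv a (mm m1 m2 a) 1).
Proof.
move=> hm ho.
have := @K_par _ _ _ _ hkappa a (1 + mm m1 m2 a)%N; rewrite /= ho /= => <-; last by lia.
by rewrite root_addm // K_neg //; lia.
Qed.


Lemma geo {R : realType} (y : complex R) (m : nat) : y ^+ m = 1 ->
  \sum_(p < m) y ^+ p.+1 = if y == 1 then m%:R else 0.
Proof.
move=> hy; case: eqP => [->|ne].
  under eq_bigr do rewrite expr1n.
  by rewrite sumr_const card_ord.
have h := subrX1 y m; rewrite hy subrr in h.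
have : \sum_(i < m) y ^+ i = 0.
  apply/eqP; move/esym/eqP: h; rewrite mulf_eq0 subr_eq0 => /orP[/eqP//|//].
move=> h0; under eq_bigr do rewrite exprS.
by rewrite -mulr_sumr h0 mulr0.
Qed.

Lemma zeta_2m {R : realType} (m : nat) : (0 < m)%N -> zeta m ^+ (2 * m) = 1 :> complex R.
Proof. by move=> hm; rewrite mulnC exprM zeta_m // expr2 mulrNN mulr1. Qed.

Lemma zeta_mod {R : realType} (m k : nat) : (0 < m)%N ->
  zeta m ^+ k = zeta m ^+ (k %% (2 * m)) :> complex R.
Proof.
move=> hm; rewrite {1}(divn_eq k (2 * m)%N) exprD exprM.
by rewrite exprAC zeta_2m // expr1n mul1r.
Qed.

Lemma th_addm {R : realType} (m p : nat) : (0 < m)%N ->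
  (p + m)%:R * pi / m%:R = p%:R * pi / m%:R + pi :> R.
Proof. by move=> hm; rewrite natrD mulrDl mulrDl thm. Qed.

Lemma sin_th_gt0 {R : realType} (m r : nat) : (0 < r < m)%N ->
  0 < sin (r%:R * pi / m%:R :> R).
Proof.
move=> /andP[h0 hm]; apply: sin_gt0_pi; apply/andP; split.
  by apply: divr_gt0; [apply: mulr_gt0; [rewrite ltr0n | exact: pi_gt0] | rewrite ltr0n; lia].
rewrite ltr_pdivrMr ?ltr0n; last by lia.
by rewrite mulrC ltr_pM2l ?pi_gt0 // ltr_nat.
Qed.

Lemma sin_th_ne0 {R : realType} (m r : nat) : (0 < r < 2 * m)%N -> r != m ->
  sin (r%:R * pi / m%:R :> R) != 0.
Proof.
move=> hr hrm; case: (ltnP r m) => h.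
  by rewrite gt_eqF // sin_th_gt0 //; lia.
have -> : r = ((r - m) + m)%N by lia.
rewrite th_addm; last by lia.
rewrite sinDpi oppr_eq0 gt_eqF // sin_th_gt0 //; lia.
Qed.

Lemma zeta_eq1 {R : realType} (m k : nat) : (0 < m)%N ->
  (zeta m ^+ k == 1 :> complex R) = (k %% (2 * m) == 0)%N.
Proof.
move=> hm; rewrite zeta_mod //.
have : (k %% (2 * m) < 2 * m)%N by rewrite ltn_mod; lia.
move: (k %% (2 * m))%N => r hr.
case: (eqVneq r 0%N) => [->|r0]; first by rewrite expr0 eqxx.
case: (eqVneq r m) => [->|rm].
  rewrite zeta_m //.
  by apply/negbTE/negP; rewrite eq_complex /= => /andP[/eqP h _]; lra.
have hs : sin (r%:R * pi / m%:R : R) != 0 by apply: sin_th_ne0 => //; lia.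
by rewrite zeta_pow eq_complex /= (negbTE hs) andbF.
Qed.

Lemma zeta_eqN1 {R : realType} (m k : nat) : (0 < m)%N ->
  (zeta m ^+ k == -1 :> complex R) = (k %% (2 * m) == m)%N.
Proof.
move=> hm; rewrite zeta_mod //.
have : (k %% (2 * m) < 2 * m)%N by rewrite ltn_mod; lia.
move: (k %% (2 * m))%N => r hr.
case: (eqVneq r 0%N) => [->|r0].
  rewrite expr0 (_ : (0 == m)%N = false); last by lia.
  by apply/negbTE/negP; rewrite eq_complex /= => /andP[/eqP h _]; lra.
case: (eqVneq r m) => [->|rm]; first by rewrite zeta_m // eqxx.
have hs : sin (r%:R * pi / m%:R : R) != 0 by apply: sin_th_ne0 => //; lia.
by rewrite zeta_pow eq_complex /= oppr0 (negbTE hs) andbF.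
Qed.


Lemma natC {R : realType} (n : nat) : (n%:R : complex R) = Cr (n%:R).
Proof. by rewrite complexr0 rmorph_nat. Qed.

Lemma negpow {R : realType} (x : complex R) n : (- x) ^+ n = (if odd n then -1 else 1) * x ^+ n.
Proof. by rewrite exprNn -signr_odd; case: (odd n); rewrite ?expr1 ?expr0. Qed.

Lemma posz_eq0 (n : nat) : (n%:Z == 0) = (n == 0)%N.
Proof. by []. Qed.

Lemma sumK {R : realType} (m1 m2 : nat) (kappa : 'rV[complex R]_4 -> R)
  (hkappa : W_invariant m1 m2 kappa) (a : 'I_2) (k : nat) :
  (0 < mm m1 m2 a)%N -> ~~ odd k ->
  \sum_(p < mm m1 m2 a) Cr (kappa (rootv a (mm m1 m2 a) p.+1)) * (zeta (mm m1 m2 a) ^+ k) ^+ p.+1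
  = Cr (Qa m1 m2 kappa a k%:Z).
Proof.
move=> hm hk.
set m := mm m1 m2 a.
set K1 := kappa (rootv a m 1); set K2 := kappa (rootv a m 2).
set x := zeta m ^+ k.
have hx : x ^+ m = 1.
  rewrite /x; have [h ->] : exists h, k = (2 * h)%N.
    by exists k./2; rewrite -{1}(odd_double_half k) (negbTE hk) add0n -mul2n.
  by rewrite -exprM mulnAC exprM zeta_2m // expr1n.
have hterm : forall p : 'I_m, Cr (kappa (rootv a m p.+1)) * x ^+ p.+1 =
    Cr ((K1 + K2) / 2) * x ^+ p.+1 + Cr ((K2 - K1) / 2) * (- x) ^+ p.+1.
  move=> p; rewrite (@K_par _ _ _ _ hkappa a p.+1); last by have := ltn_ord p; rewrite /m; lia.
  rewrite negpow -/K1 -/K2.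
  case: (odd p.+1).
    suff -> : Cr K1 = Cr ((K1 + K2) / 2) - Cr ((K2 - K1) / 2) by ring.
    by ceq; field.
  suff -> : Cr K2 = Cr ((K1 + K2) / 2) + Cr ((K2 - K1) / 2) by ring.
  by ceq; field.
rewrite (eq_bigr _ (fun p _ => hterm p)) big_split -!mulr_sumr /= geo //.
rewrite /Qa /= -/m modz_nat posz_eq0 eqz_nat /kodd /keven -/m -/K1 -/K2.
rewrite /x zeta_eq1 //.
case ho: (odd m).
  rewrite /K2 (@K_oddm _ _ _ _ hkappa a) // -/K1 subrr mul0r Cr0 mul0r addr0.
  by case: ifP => _; rewrite ?natC; ceq; field.
have hx' : (- x) ^+ m = 1 by rewrite negpow ho mul1r.
rewrite geo // eqr_oppLR /x zeta_eqN1 //.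
case: ifP => [/eqP e0|_].
  rewrite (_ : (k %% (2 * m) == m)%N = false); last by lia.
  by rewrite natC; ceq; field.
by case: ifP => _; rewrite ?natC; ceq; field.
Qed.


Lemma bil_z_root {R : realType} (a : 'I_2) (s : bool) (m p : nat) :
  bil (zvec a s) (rootv a m p) =
  (if s then Complex (sin (p%:R * pi / m%:R)) (- cos (p%:R * pi / m%:R))
   else Complex (sin (p%:R * pi / m%:R)) (cos (p%:R * pi / m%:R))) :> complex R.
Proof.
case: a => [[|[|//]] ha]; case: s;
  rewrite /bil !big_ord_recr big_ord0 /zvec /rootv /alpha /beta /vec4 /= !mxE /=; ceq; ring.
Qed.

Lemma OactE {R : realType} (m1 m2 : nat) (kappa : 'rV[complex R]_4 -> R)
  (U : lmodType (complex R)) (rho : @clif R -> {linear U -> U}) (a : 'I_2) (s : bool) (w : U) :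
  Oact m1 m2 kappa rho (zvec a s) w =
  \sum_(p < mm m1 m2 a) (Cr (kappa (rootv a (mm m1 m2 a) p.+1)) *
       bil (zvec a s) (rootv a (mm m1 m2 a) p.+1)) *: rho (gamma (rootv a (mm m1 m2 a) p.+1)) w.
Proof.
case: a => [[|[|//]] ha]; rewrite /Oact /mm /rootv /=.
  rewrite [X in _ + X]big1 ?addr0 // => q _.
  have -> : bil (zvec (Ordinal ha) s) (beta m2 q.+1) = 0 :> complex R.
    by case: s; rewrite /bil !big_ord_recr big_ord0 /zvec /beta /vec4 /= !mxE /=; ceq; ring.
  by rewrite mulr0 scale0r.
rewrite [X in X + _]big1 ?add0r // => q _.
have -> : bil (zvec (Ordinal ha) s) (alpha m1 q.+1) = 0 :> complex R.
  by case: s; rewrite /bil !big_ord_recr big_ord0 /zvec /alpha /vec4 /= !mxE /=; ceq; ring.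
by rewrite mulr0 scale0r.
Qed.


Lemma term_id {R : realType} (m l p : nat) (s : bool) : odd l ->
  (if s then Complex (sin (p%:R * pi / m%:R)) (- cos (p%:R * pi / m%:R))
   else Complex (sin (p%:R * pi / m%:R)) (cos (p%:R * pi / m%:R))) * - (zeta m ^+ (l * p))
  = sgnC s * Complex 0 1 * (zeta m ^+ (if s then l.+1 else l.-1)) ^+ p :> complex R.
Proof.
move=> hl; set th := p%:R * pi / m%:R.
case: s => /=.
  rewrite -exprM mulSn exprD (zeta_pow m p) -/th.
  have h : Complex (sin th) (- cos th) * -1 = Complex 0 1 * Complex (cos th) (sin th) :> complex R.
    by ceq; ring.
  transitivity ((Complex (sin th) (- cos th) * -1) * zeta m ^+ (l * p)); first ring.
  by rewrite h; ring.
have l0 : (0 < l)%N by case: l hl.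
rewrite -{1}(prednK l0) mulSn exprD (zeta_pow m p) -/th -exprM.
have h : Complex (sin th) (cos th) * Complex (cos th) (sin th) = Complex 0 1 :> complex R.
  ceq; first by ring.
  by rewrite [RHS](sc1 th); ring.
transitivity (- (Complex (sin th) (cos th) * Complex (cos th) (sin th)) * zeta m ^+ (l.-1 * p)).
  ring.
by rewrite h; ring.
Qed.

Lemma hk_lem (l : nat) (s : bool) : odd l -> ~~ odd (if s then l.+1 else l.-1).
Proof.
move=> hl; have l0 : (0 < l)%N by rewrite lt0n; apply/eqP => h; rewrite h in hl.
case: s => /=; first by rewrite hl.
by move: hl; rewrite -{1}(prednK l0) /=.
Qed.

Lemma hkz_lem (l : nat) (s : bool) : odd l -> (l%:Z + sgnZ s) = (if s then l.+1 else l.-1)%:Z.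
Proof.
move=> hl; have l0 : (0 < l)%N by rewrite lt0n; apply/eqP => h; rewrite h in hl.
case: s => /=; first by rewrite -addn1 PoszD.
by rewrite -{1}(prednK l0) -addn1 PoszD addrK.
Qed.

Lemma core {R : realType} (m1 m2 : nat) (kappa : 'rV[complex R]_4 -> R)
  (hkappa : W_invariant m1 m2 kappa)
  (U : lmodType (complex R)) (rho : @clif R -> {linear U -> U})
  (rhoM : forall g h, Wt m1 m2 g -> Wt m1 m2 h ->
            forall v, rho (clmul g h) v = rho g (rho h v))
  (a : 'I_2) (l : nat) (w : U) :
  (0 < mm m1 m2 a)%N -> odd l ->
  rho (rt m1 m2 a) w = zeta (mm m1 m2 a) ^+ l *: w ->
  forall s, Oact m1 m2 kappa rho (zvec a s) w =
   (sgnC s * Complex 0 1 * Complex (Qa m1 m2 kappa a (l%:Z + sgnZ s)) 0) *: rho (ft m1 m2 a) w.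
Proof.
move=> hm hl hw s.
rewrite OactE.
have hk := @hk_lem l s hl.
have hkz := @hkz_lem l s hl.
rewrite hkz.
set k := if s then l.+1 else l.-1.
have e : forall p : 'I_(mm m1 m2 a),
  (Cr (kappa (rootv a (mm m1 m2 a) p.+1)) * bil (zvec a s) (rootv a (mm m1 m2 a) p.+1))
     *: rho (gamma (rootv a (mm m1 m2 a) p.+1)) w =
  (Cr (kappa (rootv a (mm m1 m2 a) p.+1)) *
     (sgnC s * Complex 0 1 * (zeta (mm m1 m2 a) ^+ k) ^+ p.+1)) *: rho (ft m1 m2 a) w.
  move=> p; rewrite (@stepB _ _ _ _ _ rhoM a l w hm hl hw p.+1); last first.
    by have := ltn_ord p; lia.
  by rewrite scalerA bil_z_root -mulrA term_id.
rewrite (eq_bigr _ (fun p _ => e p)) -scaler_suml; congr (_ *: _).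
under eq_bigr do rewrite mulrCA.
by rewrite -mulr_sumr sumK.
Qed.


Lemma Oact_scale {R : realType} (m1 m2 : nat) (kappa : 'rV[complex R]_4 -> R)
  (U : lmodType (complex R)) (rho : @clif R -> {linear U -> U}) x (c : complex R) (w : U) :
  Oact m1 m2 kappa rho x (c *: w) = c *: Oact m1 m2 kappa rho x w.
Proof.
rewrite /Oact scalerDr !scaler_sumr; congr (_ + _); apply: eq_bigr => p _;
  by rewrite linearZ /= !scalerA mulrC.
Qed.

Lemma modsym (m j1 j2 : nat) : (0 < m)%N -> (j1 + j2 = 2 * m)%N ->
  ((j1 %% (2 * m) == 0) = (j2 %% (2 * m) == 0))%N /\
  ((j1 %% (2 * m) == m) = (j2 %% (2 * m) == m))%N.
Proof.
move=> hm hs.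
case: (posnP j2) => [z2|p2].
  have -> : j1 = (2 * m)%N by lia.
  by rewrite z2 modnn mod0n.
case: (posnP j1) => [z1|p1].
  have -> : j2 = (2 * m)%N by lia.
  by rewrite z1 modnn mod0n.
rewrite !modn_small; try lia.
Qed.

Lemma Qsym {R : realType} (m1 m2 : nat) (kappa : 'rV[complex R]_4 -> R) (a : 'I_2) (l : nat) (s : bool) :
  (0 < mm m1 m2 a)%N -> (1 <= l <= 2 * mm m1 m2 a - 1)%N ->
  Qa m1 m2 kappa a ((2 * mm m1 m2 a - l)%N%:Z + sgnZ s) = Qa m1 m2 kappa a (l%:Z - sgnZ s).
Proof.
move=> hm hl.
set m := mm m1 m2 a.
have [j1 e1] : exists j1 : nat, (2 * m - l)%N%:Z + sgnZ s = j1%:Z.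
  exists (if s then (2 * m - l).+1 else (2 * m - l).-1)%N.
  case: s => /=; first by rewrite -[(2 * m - l).+1]addn1 PoszD.
  have h0 : (0 < 2 * m - l)%N by lia.
  by rewrite -{1}(prednK h0) -[(2 * m - l).-1.+1]addn1 PoszD addrK.
have [j2 e2] : exists j2 : nat, l%:Z - sgnZ s = j2%:Z.
  exists (if s then l.-1 else l.+1)%N.
  have h0 : (0 < l)%N by lia.
  case: s {e1} => /=; last by rewrite opprK -[l.+1]addn1 PoszD.
  by rewrite -{1}(prednK h0) -[l.-1.+1]addn1 PoszD addrK.
have hs : (j1 + j2 = 2 * m)%N.
  apply/eqP; rewrite -eqz_nat PoszD -e1 -e2 -subzn; last by lia.
  by apply/eqP; ring.
have [h0 hmm] := @modsym m j1 j2 hm hs.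
by rewrite e1 e2 /Qa /= -/m !modz_nat !posz_eq0 !eqz_nat h0 hmm.
Qed.


Definition rinv {R : realType} (m1 m2 : nat) (a : 'I_2) : @clif R :=
  clmul (gamma (rootv a (mm m1 m2 a) (mm m1 m2 a).+1))
        (clmul (gamma (rootv a (mm m1 m2 a) (mm m1 m2 a))) cl1).

Lemma ftft {R : realType} (m1 m2 : nat) (a : 'I_2) : (0 < mm m1 m2 a)%N ->
  clmul (ft m1 m2 a) (ft m1 m2 a) = cl1 :> @clif R.
Proof. by move=> hm; rewrite ftE // mulSS ?ia_ja // subrr E0. Qed.

Lemma rtft {R : realType} (m1 m2 : nat) (a : 'I_2) : (0 < mm m1 m2 a)%N ->
  clmul (rt m1 m2 a) (ft m1 m2 a) = clmul (ft m1 m2 a) (rinv m1 m2 a) :> @clif R.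
Proof.
move=> hm; rewrite rtE // ftE // /rinv !gamma_root mulS1 ?ia_ja // thS thm //.
rewrite mulSS ?ia_ja // mulES ?ia_ja // mulSE ?ia_ja //; congr Sq; ring.
Qed.

Lemma rinvrt {R : realType} (m1 m2 : nat) (a : 'I_2) : (0 < mm m1 m2 a)%N ->
  clmul (rinv m1 m2 a) (rt m1 m2 a) = cl1 :> @clif R.
Proof.
move=> hm; rewrite rtE // /rinv !gamma_root mulS1 ?ia_ja // thS thm //.
rewrite mulSS ?ia_ja // mulEE ?ia_ja //.
rewrite (_ : _ + _ = 0) ?E0 //; ring.
Qed.

Lemma Wt_rinv {R : realType} (m1 m2 : nat) (a : 'I_2) : (0 < mm m1 m2 a)%N ->
  Wt m1 m2 (rinv m1 m2 a : @clif R).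
Proof.
move=> hm; apply: Wt_gen; first by apply: inR_root; lia.
by apply: Wt_gen; [apply: inR_root; lia | exact: Wt_one].
Qed.

Theorem lemma5p5 (R : realType) (m1 m2 : nat)
  (hm1 : (0 < m1)%N) (hm2 : (0 < m2)%N)
  (kappa : 'rV[complex R]_4 -> R) (hkappa : W_invariant m1 m2 kappa)
  (U : lmodType (complex R)) (rho : @clif R -> {linear U -> U})
  (rho1 : forall v, rho cl1 v = v)
  (rhoM : forall g h, Wt m1 m2 g -> Wt m1 m2 h ->
            forall v, rho (clmul g h) v = rho g (rho h v))
  (rhoz : forall v, rho clz v = - v)
  (l1 l2 : nat)
  (hl1 : [&& odd l1, (1 <= l1)%N & (l1 <= 2 * m1 - 1)%N])
  (hl2 : [&& odd l2, (1 <= l2)%N & (l2 <= 2 * m2 - 1)%N])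
  (u : U)
  (hu1 : rho (rt m1 m2 0) u = zeta m1 ^+ l1 *: u)
  (hu2 : rho (rt m1 m2 1) u = zeta m2 ^+ l2 *: u) :
  forall (a : 'I_2) (s : bool),
    Oact m1 m2 kappa rho (zvec a s) u =
      (sgnC s * Complex 0 1
        * Complex (Qa m1 m2 kappa a ((mm l1 l2 a)%:Z + sgnZ s)) 0)
        *: rho (ft m1 m2 a) u
    /\
    Oact m1 m2 kappa rho (zvec a s) (Oact m1 m2 kappa rho (zvec a (~~ s)) u) =
      Complex (Qa m1 m2 kappa a ((mm l1 l2 a)%:Z - sgnZ s) ^+ 2) 0 *: u.
Proof.
move=> a s.
have ha : a = 0 \/ a = 1.
  by case: a => [[|[|//]] ?]; [left|right]; apply/val_inj.
have hm : (0 < mm m1 m2 a)%N by case: ha => ->.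
have hl : odd (mm l1 l2 a) && (1 <= mm l1 l2 a <= 2 * mm m1 m2 a - 1)%N.
  by case: ha => ->.
have hu : rho (rt m1 m2 a) u = zeta (mm m1 m2 a) ^+ (mm l1 l2 a) *: u.
  by case: ha => ->.
case/andP: hl => hlo hlr.
split; first exact: (@core _ m1 m2 kappa hkappa U rho rhoM a _ u hm hlo hu s).
rewrite (@core _ m1 m2 kappa hkappa U rho rhoM a _ u hm hlo hu (~~ s)) Oact_scale.
have WtF : Wt m1 m2 (ft m1 m2 a : @clif R) by apply: WtG; lia.
have WtI := @Wt_rinv R m1 m2 a hm.
have WtR := @Wt_rt R m1 m2 a hm.
have h1 : zeta (mm m1 m2 a) ^+ (mm l1 l2 a) *: rho (rinv m1 m2 a) u = u.
  by rewrite -linearZ /= -hu -rhoM // rinvrt // rho1.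
have hinv : rho (rinv m1 m2 a) u = zeta (mm m1 m2 a) ^+ (2 * mm m1 m2 a - mm l1 l2 a) *: u.
  rewrite -{2}h1 scalerA -exprD subnK; last by lia.
  by rewrite zeta_2m // scale1r.
have hF : rho (rt m1 m2 a) (rho (ft m1 m2 a) u) =
    zeta (mm m1 m2 a) ^+ (2 * mm m1 m2 a - mm l1 l2 a) *: rho (ft m1 m2 a) u.
  by rewrite -rhoM // rtft // rhoM // hinv linearZ.
have hlo' : odd (2 * mm m1 m2 a - mm l1 l2 a).
  by rewrite oddB ?oddM /= ?hlo //; lia.
rewrite (@core _ m1 m2 kappa hkappa U rho rhoM a _ _ hm hlo' hF s).
rewrite -rhoM // ftft // rho1 scalerA; congr (_ *: _).
rewrite Qsym //.
rewrite (_ : (mm l1 l2 a)%:Z + sgnZ (~~ s) = (mm l1 l2 a)%:Z - sgnZ s); last by case: s.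
by case: s; ceq; ring.
Qed.
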